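(* Let $I\subseteq\mathbb{R}$ be an open interval (possibly unbounded), $\Sigma=I\times\mathbb{R}$, and let $h\ge1$, $L\ge1$ be integers. Let $F\in C^\omega(\Sigma,\mathbb{R}^2)$ be a non-singular map of the form $F(x,y)=\Big(\sum_{l=1}^L p_{2hl}(x)y^{2hl}+p_1(x)y+p_0(x),\;q_{2h}(x)y^{2h}+q_0(x)\Big)$. If $p_1(x)\neq0$ for all $x\in I$, then $F$ is injective.
   Context: For $F=(P,Q)$, $d_F=P_xQ_y-P_yQ_x$ is the Jacobian determinant; $F$ is non-singular if $d_F(x,y)\neq0$ for all $(x,y)\in\Sigma$. $C^\omega$ denotes real analytic. *)

(* Defs.v *)
From Stdlib Require Import Reals.
From Coquelicot Require Import Coquelicot.
Open Scope R_scope.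

Definition in_open_interval (a b : Rbar) (x : R) : Prop :=
  Rbar_lt a x /\ Rbar_lt x b.

Definition analytic2_at (f : R -> R -> R) (a b : R) : Prop :=
  exists (c : nat -> nat -> R) (r : R), 0 < r /\
    forall x y, Rabs (x - a) < r -> Rabs (y - b) < r ->
      (exists M : R, forall N : nat,
          sum_f_R0 (fun i => sum_f_R0 (fun j =>
             Rabs (c i j) * Rabs (x - a) ^ i * Rabs (y - b) ^ j) N) N <= M) /\
      is_lim_seq (fun N : nat =>
          sum_f_R0 (fun i => sum_f_R0 (fun j =>
             c i j * (x - a) ^ i * (y - b) ^ j) N) N) (f x y).

Definition analytic_on_strip (a b : Rbar) (f : R -> R -> R) : Prop :=
  forall x y, in_open_interval a b x -> analytic2_at f x y.

Definition jacobian_det (P Q : R -> R -> R) (x y : R) : R :=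
  Derive (fun t => P t y) x * Derive (fun t => Q x t) y
  - Derive (fun t => P x t) y * Derive (fun t => Q t y) x.

(* Main.v *)
Require Import Defs.
From Stdlib Require Import Reals.
From Coquelicot Require Import Coquelicot.
From Stdlib Require Import Lra Lia Psatz List.
Open Scope R_scope.

Lemma isd_plus (f g : R -> R) (x df dg : R) : is_derive f x df -> is_derive g x dg ->
  is_derive (fun t => f t + g t) x (df + dg).
Proof. intros; now apply (is_derive_plus f g). Qed.
Lemma isd_minus (f g : R -> R) (x df dg : R) : is_derive f x df -> is_derive g x dg ->
  is_derive (fun t => f t - g t) x (df - dg).
Proof. intros; now apply (is_derive_minus f g). Qed.
Lemma isd_mult (f g : R -> R) (x df dg : R) : is_derive f x df -> is_derive g x dg ->
  is_derive (fun t => f t * g t) x (df * g x + f x * dg).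
Proof. intros; apply (is_derive_mult f g); auto. intros; apply Rmult_comm. Qed.
Lemma isd_comp (f g : R -> R) (x df dg : R) : is_derive f (g x) df -> is_derive g x dg ->
  is_derive (fun t => f (g t)) x (dg * df).
Proof. intros; now apply (is_derive_comp f g). Qed.
Lemma isd_eq (f : R -> R) (x l l2 : R) : is_derive f x l -> l = l2 -> is_derive f x l2.
Proof. intros H ->; exact H. Qed.
Lemma isd_const (a x : R) : is_derive (fun _ => a) x 0.
Proof. apply (is_derive_const a x). Qed.
Lemma isd_id (x : R) : is_derive (fun t => t) x 1.
Proof. apply (is_derive_id x). Qed.
Lemma isd_powf (f : R -> R) (x df : R) n : is_derive f x df ->
  is_derive (fun t => f t ^ n) x (INR n * df * f x ^ pred n).
Proof. apply is_derive_pow. Qed.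
Lemma isd_ext (f g : R -> R) (x l : R) : (forall t, f t = g t) -> is_derive f x l -> is_derive g x l.
Proof. intros; eapply is_derive_ext; eauto. Qed.
Lemma isd_ex (f : R -> R) x l : is_derive f x l -> ex_derive f x.
Proof. intros H; exists l; exact H. Qed.
Lemma ex_isd (f : R -> R) x : ex_derive f x -> is_derive f x (Derive f x).
Proof. intros H; now apply Derive_correct. Qed.
Lemma cont_of_isd (f : R -> R) x l : is_derive f x l -> continuity_pt f x.
Proof. intros H. apply continuity_pt_filterlim. apply (ex_derive_continuous (V:=R_NormedModule)). exists l; exact H. Qed.


Lemma exd_plus (f g : R -> R) x : ex_derive f x -> ex_derive g x -> ex_derive (fun t => f t + g t) x.
Proof. intros [a Ha] [b Hb]; exists (a+b); now apply isd_plus. Qed.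
Lemma exd_minus (f g : R -> R) x : ex_derive f x -> ex_derive g x -> ex_derive (fun t => f t - g t) x.
Proof. intros [a Ha] [b Hb]; exists (a-b); now apply isd_minus. Qed.
Lemma exd_mult (f g : R -> R) x : ex_derive f x -> ex_derive g x -> ex_derive (fun t => f t * g t) x.
Proof. intros [a Ha] [b Hb]; eexists; apply isd_mult; eauto. Qed.
Lemma exd_const (a x : R) : ex_derive (fun _ => a) x.
Proof. exists 0; apply isd_const. Qed.
Lemma exd_div (f g : R -> R) x : ex_derive f x -> ex_derive g x -> g x <> 0 -> ex_derive (fun t => f t / g t) x.
Proof. intros [a Ha] [b Hb] Hg; eexists; apply is_derive_div; eauto. Qed.
Lemma exd_ext (f g : R -> R) x : (forall t, f t = g t) -> ex_derive f x -> ex_derive g x.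
Proof. intros H [a Ha]; exists a; eapply isd_ext; eauto. Qed.

Definition dpoly (a : nat -> R -> R) (d : nat) (x s : R) : R :=
  sum_f_R0 (fun l => a l x * s ^ l) d.
Definition dpolyD (a : nat -> R -> R) (d : nat) (x s : R) : R :=
  sum_f_R0 (fun l => a l x * (INR l * s ^ pred l)) d.

Lemma dpoly_S a d x s : dpoly a (S d) x s = a 0%nat x + s * dpoly (fun l => a (S l)) d x s.
Proof.
  unfold dpoly. revert a. induction d; intros a; simpl.
  - ring.
  - simpl in IHd. rewrite IHd. ring.
Qed.

Lemma dpoly_0 a d x : dpoly a d x 0 = a 0%nat x.
Proof. destruct d. unfold dpoly; simpl; ring. rewrite dpoly_S; ring. Qed.

Lemma dpoly_derx (a da : nat -> R -> R) d x0 (s : R -> R) ds :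
  (forall l, (l <= d)%nat -> is_derive (a l) x0 (da l x0)) -> is_derive s x0 ds ->
  is_derive (fun x => dpoly a d x (s x)) x0 (dpoly da d x0 (s x0) + dpolyD a d x0 (s x0) * ds).
Proof.
  intros Ha Hs. unfold dpoly, dpolyD. induction d.
  - simpl. eapply isd_eq. apply isd_mult. apply Ha; lia. apply (isd_powf s x0 ds 0 Hs).
    simpl; ring.
  - simpl. eapply isd_eq. apply isd_plus. apply IHd. intros; apply Ha; lia.
    apply isd_mult. apply Ha; lia. apply (isd_powf s x0 ds (S d) Hs).
    simpl. ring.
Qed.

Lemma dpoly_ders (a : nat -> R -> R) d x s0 :
  is_derive (fun s => dpoly a d x s) s0 (dpolyD a d x s0).
Proof.
  unfold dpoly, dpolyD. induction d.
  - simpl. eapply isd_eq. apply isd_const. simpl; ring.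
  - simpl. eapply isd_eq. apply isd_plus. apply IHd.
    apply (is_derive_scal (fun t => t ^ S d)). apply (isd_powf (fun t => t) s0 1 (S d) (isd_id s0)).
    simpl. ring.
Qed.

Lemma dpoly_cont a d x s0 : continuity_pt (fun s => dpoly a d x s) s0.
Proof. eapply cont_of_isd; apply dpoly_ders. Qed.

Fixpoint IsPoly (d : nat) (A : R -> R -> R) : Prop :=
  match d with
  | O => exists a : R -> R, forall x s, A x s = a x
  | S d' => exists (a : R -> R) (B : R -> R -> R), IsPoly d' B /\ forall x s, A x s = a x + s * B x s
  end.

Lemma IsPoly_dpoly d : forall a, IsPoly d (dpoly a d).
Proof.
  induction d; intros a.
  - exists (a 0%nat). intros; unfold dpoly; simpl; ring.
  - simpl. exists (a 0%nat), (dpoly (fun l => a (S l)) d). split. apply IHd.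
    intros; apply dpoly_S.
Qed.

Lemma IsPoly_recenter d : forall A, IsPoly (S d) A -> forall c, exists B, IsPoly d B /\
  forall x s, A x s = A x c + (s - c) * B x s.
Proof.
  induction d; intros A HA c.
  - destruct HA as [a [B [[b Hb] HAB]]].
    exists B. split. exists b; exact Hb.
    intros x s. rewrite !HAB, !Hb. ring.
  - destruct HA as [a [B [HB HAB]]].
    destruct (IHd B HB c) as [B2 [HB2 HBc]].
    exists (fun x s => B x c + s * B2 x s). split.
    + exists (fun x => B x c), B2. split; [exact HB2| intros; reflexivity].
    + intros x s. rewrite !HAB. rewrite (HBc x s). ring.
Qed.

Lemma exists_fresh (F : list R) : exists c, 0 < c /\ ~ In c F.
Proof.
  exists (1 + fold_right (fun f acc => Rabs f + acc) 0 F).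
  assert (H0 : forall G, 0 <= fold_right (fun f acc => Rabs f + acc) 0 G).
  { induction G; simpl. lra. pose proof (Rabs_pos a). lra. }
  split. pose proof (H0 F); lra.
  assert (Hb : forall G f, In f G -> f <= fold_right (fun f acc => Rabs f + acc) 0 G).
  { induction G; simpl; intros f Hf. contradiction. destruct Hf as [->|Hf].
    pose proof (Rle_abs f); pose proof (H0 G); lra.
    pose proof (IHG f Hf); pose proof (Rabs_pos a); lra. }
  intros Hin. pose proof (Hb F _ Hin). lra.
Qed.

Lemma stage1 x0 d : forall A, IsPoly d A -> forall F : list R,
  (forall s, 0 < s -> ~ In s F -> ex_derive (fun x => A x s) x0) ->
  forall s, ex_derive (fun x => A x s) x0.
Proof.
  induction d; intros A HA F Hgood s.
  - destruct HA as [a Ha]. destruct (exists_fresh F) as [c [Hc HcF]].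
    specialize (Hgood c Hc HcF).
    eapply exd_ext; [|exact Hgood]. intros t; simpl. rewrite !Ha; reflexivity.
  - destruct (exists_fresh F) as [c [Hc HcF]].
    destruct (IsPoly_recenter d A HA c) as [B [HB HAB]].
    assert (HBd : forall s, ex_derive (fun x => B x s) x0).
    { apply (IHd B HB (c :: F)). intros s' Hs' Hin.
      assert (Hsc : s' - c <> 0).
      { intros E. apply Hin. left. lra. }
      assert (HF : ~ In s' F). { intros H; apply Hin; right; exact H. }
      eapply exd_ext with (f := fun x => (A x s' - A x c) / (s' - c)).
      { intros t. simpl. rewrite (HAB t s'). field. exact Hsc. }
      apply exd_div. apply exd_minus. apply Hgood; auto. apply Hgood; auto.
      apply exd_const. exact Hsc. }
    eapply exd_ext with (f := fun x => A x c + (s - c) * B x s).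
    { intros t; simpl. rewrite (HAB t s). reflexivity. }
    apply exd_plus. apply Hgood; auto. apply exd_mult. apply exd_const. apply HBd.
Qed.

Lemma stage2 x0 d : forall a, (forall s, 0 < s -> ex_derive (fun x => dpoly a d x s) x0) ->
  forall l, (l <= d)%nat -> ex_derive (a l) x0.
Proof.
  intros a Hg.
  assert (Hall : forall s, ex_derive (fun x => dpoly a d x s) x0).
  { apply (stage1 x0 d _ (IsPoly_dpoly d a) nil). intros; auto. }
  revert a Hg Hall. induction d; intros a Hg Hall l Hl.
  - assert (l = 0%nat) by lia. subst.
    eapply exd_ext; [|apply (Hall 0)]. intros t; simpl. rewrite dpoly_0. reflexivity.
  - destruct l.
    + eapply exd_ext; [|apply (Hall 0)]. intros t; simpl. rewrite dpoly_0. reflexivity.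
    + apply (IHd (fun l => a (S l))); [| |lia].
      * intros s Hs. eapply exd_ext with (f := fun x => (dpoly a (S d) x s - dpoly a (S d) x 0) / s).
        { intros t. simpl. rewrite dpoly_S, dpoly_0. field. lra. }
        apply exd_div. apply exd_minus. apply Hall. apply Hall. apply exd_const. lra.
      * apply (stage1 x0 d _ (IsPoly_dpoly d _) nil). intros s Hs _.
        eapply exd_ext with (f := fun x => (dpoly a (S d) x s - dpoly a (S d) x 0) / s).
        { intros t. simpl. rewrite dpoly_S, dpoly_0. field. lra. }
        apply exd_div. apply exd_minus. apply Hall. apply Hall. apply exd_const. lra.
Qed.

Lemma sum_zero_pow (g : nat -> R) N : sum_f_R0 (fun j => g j * 0 ^ j) N = g 0%nat.
Proof. induction N; simpl. ring. rewrite IHN. ring. Qed.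

Lemma slice_exd f x0 y0 : analytic2_at f x0 y0 -> ex_derive (fun x => f x y0) x0.
Proof.
  intros [c [r [Hr H]]].
  set (a := fun i => c i 0%nat).
  assert (Hs : forall x N, sum_f_R0 (fun i => sum_f_R0 (fun j => c i j * (x - x0) ^ i * (y0 - y0) ^ j) N) N
                = sum_f_R0 (fun i => a i * (x - x0) ^ i) N).
  { intros x N. apply sum_eq. intros i _. rewrite Rminus_diag. apply (sum_zero_pow (fun j => c i j * (x - x0) ^ i)). }
  assert (Ha : forall x N, sum_f_R0 (fun i => sum_f_R0 (fun j => Rabs (c i j) * Rabs (x - x0) ^ i * Rabs (y0 - y0) ^ j) N) N
                = sum_f_R0 (fun i => Rabs (a i) * Rabs (x - x0) ^ i) N).
  { intros x N. apply sum_eq. intros i _. rewrite Rminus_diag, Rabs_R0. apply (sum_zero_pow (fun j => Rabs (c i j) * Rabs (x - x0) ^ i)). }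
  assert (Hy0 : Rabs (y0 - y0) < r). { rewrite Rminus_diag, Rabs_R0; lra. }
  assert (HCV : Rbar_lt (Rabs 0) (CV_radius a)).
  { destruct (H (x0 + r/2) y0) as [[M HM] _]; [| exact Hy0 |].
    { replace (x0 + r/2 - x0) with (r/2) by ring. rewrite Rabs_pos_eq; lra. }
    destruct (CV_radius_bounded a) as [Hub _].
    assert (Hle : Rbar_le (r/2) (CV_radius a)).
    { apply Hub. exists M. intros n. specialize (HM n). rewrite Ha in HM.
      replace (x0 + r/2 - x0) with (r/2) in HM by ring.
      rewrite Rabs_mult, <- RPow_abs.
      eapply Rle_trans; [|exact HM]. destruct n. simpl; lra. cbn [sum_f_R0].
      assert (0 <= sum_f_R0 (fun i => Rabs (a i) * Rabs (r / 2) ^ i) n).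
      { apply cond_pos_sum. intros k. apply Rmult_le_pos. apply Rabs_pos. apply pow_le, Rabs_pos. }
      lra. }
    eapply Rbar_lt_le_trans; [|exact Hle]. rewrite Rabs_R0. simpl. lra. }
  assert (Hloc : locally x0 (fun x => PSeries a (x - x0) = f x y0)).
  { exists (mkposreal r Hr). intros x Hx. simpl in Hx. unfold ball in Hx; simpl in Hx. unfold AbsRing_ball in Hx. simpl in Hx.
    apply is_pseries_unique. apply is_pseries_R. unfold is_series.
    eapply filterlim_ext; [intro; rewrite <- sum_n_Reals; reflexivity|].
    destruct (H x y0) as [_ Hl]; [exact Hx| exact Hy0|].
    assert (Hl' : is_lim_seq (fun N => sum_f_R0 (fun i => a i * (x - x0) ^ i) N) (f x y0)).
    { eapply is_lim_seq_ext; [|exact Hl]. intros N. simpl. apply Hs. }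
    exact Hl'. }
  apply (ex_derive_ext_loc (V := R_NormedModule) _ _ x0 Hloc).
  assert (He : ex_derive (PSeries a) (x0 - x0)). { rewrite Rminus_diag. apply ex_derive_PSeries. exact HCV. }
  destruct He as [l Hl]. exists (1 * l). apply (isd_comp (PSeries a) (fun x => x - x0)). exact Hl.
  eapply isd_eq. apply isd_minus. apply isd_id. apply isd_const. apply Rminus_0_r.
Qed.

Lemma I_loc a b x : in_open_interval a b x -> locally x (fun t => in_open_interval a b t).
Proof.
  intros H. apply (open_and (T:=R_UniformSpace) (fun t : R => Rbar_lt a t) (fun t : R => Rbar_lt t b)).
  apply open_Rbar_gt. apply open_Rbar_lt. exact H.
Qed.

Lemma exd_loc (f g : R -> R) x : locally x (fun t => f t = g t) -> ex_derive f x -> ex_derive g x.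
Proof. intros; eapply (ex_derive_ext_loc (V := R_NormedModule)); eauto. Qed.
Lemma isd_loc (f g : R -> R) x l : locally x (fun t => f t = g t) -> is_derive f x l -> is_derive g x l.
Proof. intros; eapply (is_derive_ext_loc (V := R_NormedModule)); eauto. Qed.

Lemma loc_imp {P Q : R -> Prop} x : (forall t, P t -> Q t) -> locally x P -> locally x Q.
Proof. intros H L; eapply filter_imp; eauto. Qed.

Definition rt (n : nat) (t : R) : R := if Rle_dec t 0 then 0 else Rpower t (/ INR n).

Lemma rt_pos n t : 0 < t -> 0 < rt n t.
Proof. intros H. unfold rt. destruct (Rle_dec t 0). lra. unfold Rpower. apply exp_pos. Qed.
Lemma rt_nonneg n t : 0 <= rt n t.
Proof. unfold rt. destruct (Rle_dec t 0). lra. unfold Rpower. left; apply exp_pos. Qed.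
Lemma rt_pow n t : (1 <= n)%nat -> 0 <= t -> rt n t ^ n = t.
Proof.
  intros Hn Ht. unfold rt. destruct (Rle_dec t 0).
  - assert (t = 0) by lra. subst. destruct n. lia. simpl; ring.
  - rewrite <- Rpower_pow. rewrite Rpower_mult. rewrite Rinv_l. apply Rpower_1. lra.
    apply not_0_INR; lia. unfold Rpower; apply exp_pos.
Qed.

Lemma pow_lt_mono a b n : (1 <= n)%nat -> 0 <= a -> a < b -> a ^ n < b ^ n.
Proof.
  intros Hn Ha Hab. induction n. lia. destruct n. simpl; lra.
  assert (IH : a ^ S n < b ^ S n) by (apply IHn; lia).
  simpl in *. assert (0 <= a * a ^ n) by (apply Rmult_le_pos; auto; apply pow_le; auto). nra.
Qed.

Lemma pow_inj a b n : (1 <= n)%nat -> 0 <= a -> 0 <= b -> a ^ n = b ^ n -> a = b.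
Proof.
  intros Hn Ha Hb E. destruct (Rtotal_order a b) as [H|[H|H]]; auto.
  pose proof (pow_lt_mono a b n Hn Ha H); lra.
  pose proof (pow_lt_mono b a n Hn Hb H); lra.
Qed.

Lemma rt_unique n y : (1 <= n)%nat -> 0 <= y -> rt n (y ^ n) = y.
Proof.
  intros Hn Hy. apply (pow_inj _ _ n Hn). apply rt_nonneg. exact Hy.
  apply rt_pow; auto. apply pow_le; auto.
Qed.

Lemma rt_exd n t : 0 < t -> ex_derive (rt n) t.
Proof.
  intros Ht. apply (exd_loc (fun s => exp (/ INR n * ln s))).
  - assert (L : locally t (fun s => 0 < s)). { apply (open_Rbar_gt (Finite 0)). simpl; exact Ht. }
    eapply loc_imp; [|exact L]. intros s Hs. simpl. unfold rt. destruct (Rle_dec s 0). lra. reflexivity.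
  - eexists. apply (isd_comp exp (fun s => / INR n * ln s)). apply is_derive_exp.
    apply is_derive_scal. apply is_derive_ln. exact Ht.
Qed.

Lemma rt_cont n t : (1 <= n)%nat -> 0 <= t -> continuity_pt (rt n) t.
Proof.
  intros Hn Ht. destruct Ht as [Ht| <-].
  - destruct (rt_exd n t Ht) as [l Hl]. eapply cont_of_isd; eauto.
  - intros eps Heps. exists (eps ^ n). split. apply pow_lt; lra.
    intros x [_ Hx]. simpl in *. unfold R_dist in *. unfold rt at 2. destruct (Rle_dec 0 0); [|lra].
    rewrite Rminus_0_r in *. rewrite Rabs_pos_eq by apply rt_nonneg.
    destruct (Rle_dec x 0). unfold rt. destruct (Rle_dec x 0); [lra| lra].
    destruct (Rlt_dec (rt n x) eps) as [E|E]; auto. exfalso.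
    assert (eps ^ n <= rt n x ^ n) by (apply pow_incr; lra).
    rewrite rt_pow in H by (auto; lra). rewrite Rabs_pos_eq in Hx by lra. lra.
Qed.

Lemma loc_incr g m l : is_derive g m l -> 0 < l ->
  exists d, 0 < d /\ forall h, 0 < h < d -> g m < g (m + h) /\ g (m - h) < g m.
Proof.
  intros H Hl. apply is_derive_Reals in H. destruct (H l Hl) as [d Hd].
  exists d. split. apply cond_pos. intros h Hh. split.
  - assert (A : Rabs ((g (m + h) - g m) / h - l) < l). { apply Hd. lra. rewrite Rabs_pos_eq; lra. }
    apply Rabs_def2 in A. destruct A as [A1 A2].
    assert (0 < (g (m + h) - g m) / h) by lra.
    assert (0 < (g (m + h) - g m) / h * h) by (apply Rmult_lt_0_compat; lra).
    replace ((g (m + h) - g m) / h * h) with (g (m + h) - g m) in H1 by (field; lra). lra.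
  - assert (A : Rabs ((g (m + - h) - g m) / - h - l) < l). { apply Hd. lra. rewrite Rabs_Ropp, Rabs_pos_eq; lra. }
    apply Rabs_def2 in A. destruct A as [A1 A2].
    assert (0 < (g (m + - h) - g m) / - h) by lra.
    assert (0 < (g (m + - h) - g m) / - h * h) by (apply Rmult_lt_0_compat; lra).
    replace ((g (m + - h) - g m) / - h * h) with (- (g (m + - h) - g m)) in H1 by (field; lra).
    replace (m - h) with (m + - h) by ring. lra.
Qed.

Lemma darb_core g dg x z : x < z -> (forall w, x <= w <= z -> is_derive g w (dg w)) ->
  (forall w, x <= w <= z -> dg w <> 0) -> 0 < dg x -> dg z < 0 -> False.
Proof.
  intros Hxz Hd Hn Hx Hz.
  destruct (continuity_ab_maj g x z) as [M [HM HMr]]. lra.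
  { intros c Hc. eapply cont_of_isd; apply Hd; auto. }
  destruct (Rtotal_order (dg M) 0) as [H|[H|H]].
  - assert (x < M). { destruct HMr as [[Hl|He] _]; auto. subst; lra. }
    destruct (loc_incr (fun t => - g t) M (- dg M)) as [d [Hd0 Hd1]].
    { apply (is_derive_opp g). apply Hd; lra. } lra.
    set (h := Rmin (d/2) ((M - x)/2)).
    assert (0 < h < d). { unfold h. split. apply Rmin_glb_lt; lra. eapply Rle_lt_trans; [apply Rmin_l|lra]. }
    destruct (Hd1 h H1) as [_ H2].
    assert (x <= M - h <= z). { assert (h <= (M - x)/2) by apply Rmin_r. lra. }
    pose proof (HM _ H3). lra.
  - apply (Hn M); auto.
  - assert (M < z). { destruct HMr as [_ [Hl|He]]; auto. subst; lra. }
    destruct (loc_incr g M (dg M)) as [d [Hd0 Hd1]]. apply Hd; lra. lra.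
    set (h := Rmin (d/2) ((z - M)/2)).
    assert (0 < h < d). { unfold h. split. apply Rmin_glb_lt; lra. eapply Rle_lt_trans; [apply Rmin_l|lra]. }
    destruct (Hd1 h H1) as [H2 _].
    assert (x <= M + h <= z). { assert (h <= (z - M)/2) by apply Rmin_r. lra. }
    pose proof (HM _ H3). lra.
Qed.

Lemma darboux g dg x z : x < z -> (forall w, x <= w <= z -> is_derive g w (dg w)) ->
  (forall w, x <= w <= z -> dg w <> 0) -> 0 < dg x * dg z.
Proof.
  intros Hxz Hd Hn.
  assert (Hx : dg x <> 0) by (apply Hn; lra). assert (Hz : dg z <> 0) by (apply Hn; lra).
  destruct (Rtotal_order (dg x) 0) as [A|[A|A]]; [|contradiction|];
  destruct (Rtotal_order (dg z) 0) as [B|[B|B]]; try contradiction; try nra.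
  - exfalso. apply (darb_core (fun t => - g t) (fun t => - dg t) x z); auto; try lra.
    intros w Hw. apply (is_derive_opp g). auto. intros w Hw E. apply (Hn w Hw). lra.
  - exfalso. apply (darb_core g dg x z); auto.
Qed.

Lemma mono_mvt g dg u w al : u < w -> (forall t, u < t < w -> is_derive g t (dg t)) ->
  (forall t, u <= t <= w -> continuity_pt g t) -> (forall t, u < t < w -> 0 < al * dg t) ->
  0 < al * (g w - g u).
Proof.
  intros Huw Hd Hc Hs.
  assert (Hal : al <> 0). { intros E. specialize (Hs ((u+w)/2)). rewrite E in Hs. lra. }
  set (df := fun t => if Rlt_dec u t then if Rlt_dec t w then dg t else al else al).
  destruct (MVT_gen g u w df) as [c [Hc1 Hc2]].
  - rewrite Rmin_left, Rmax_right by lra. intros t Ht. unfold df.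
    destruct (Rlt_dec u t); [|lra]. destruct (Rlt_dec t w); [|lra]. apply Hd; lra.
  - rewrite Rmin_left, Rmax_right by lra. exact Hc.
  - rewrite Hc2. assert (0 < al * df c).
    { unfold df. destruct (Rlt_dec u c). destruct (Rlt_dec c w). apply Hs; lra.
      apply Rsqr_pos_lt in Hal; unfold Rsqr in Hal; lra. apply Rsqr_pos_lt in Hal; unfold Rsqr in Hal; lra. }
    replace (al * (df c * (w - u))) with ((al * df c) * (w - u)) by ring.
    apply Rmult_lt_0_compat; lra.
Qed.

Lemma cont_sign (g : R -> R) : (forall y, continuity_pt g y) -> (forall y, g y <> 0) ->
  forall y z, 0 < g y * g z.
Proof.
  intros Hc Hn y z. destruct (Rlt_dec 0 (g y * g z)) as [H|H]; auto. exfalso.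
  destruct (IVT_gen g y z 0 Hc) as [x [_ Hx]].
  - pose proof (Hn y); pose proof (Hn z). unfold Rmin, Rmax; destruct Rle_dec; split; nra.
  - apply (Hn x Hx).
Qed.

Definition PX (e : nat -> R -> R) L (p1 : R -> R) n x y :=
  dpoly (fun l => Derive (e l)) L x (y ^ n) + Derive p1 x * y.
Definition PY (e : nat -> R -> R) L (p1 : R -> R) n x y :=
  dpolyD e L x (y ^ n) * (INR n * y ^ pred n) + p1 x.
Definition QX (q q0 : R -> R) n x y := Derive q x * y ^ n + Derive q0 x.
Definition QY (q : R -> R) n x y := q x * (INR n * y ^ pred n).
Definition Jf e L p1 q q0 n x y :=
  PX e L p1 n x y * QY q n x y - PY e L p1 n x y * QX q q0 n x y.

Lemma chainP (a b : Rbar) (P : R -> R -> R) e L p1 n x0 (Y : R -> R) dY :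
  (forall x y, in_open_interval a b x -> P x y = dpoly e L x (y ^ n) + p1 x * y) ->
  in_open_interval a b x0 -> (forall l, (l <= L)%nat -> ex_derive (e l) x0) -> ex_derive p1 x0 ->
  is_derive Y x0 dY ->
  is_derive (fun x => P x (Y x)) x0 (PX e L p1 n x0 (Y x0) + PY e L p1 n x0 (Y x0) * dY).
Proof.
  intros HP Hx He Hp HY.
  apply (isd_loc (fun x => dpoly e L x (Y x ^ n) + p1 x * Y x)).
  { eapply loc_imp; [|apply (I_loc a b x0 Hx)]. intros t Ht. simpl. rewrite HP; auto. }
  eapply isd_eq. apply isd_plus.
  apply (dpoly_derx e (fun l => Derive (e l)) L x0 (fun x => Y x ^ n) (INR n * dY * Y x0 ^ pred n)).
  intros l Hl. apply ex_isd. auto. apply isd_powf. exact HY.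
  apply isd_mult. apply ex_isd; auto. exact HY.
  unfold PX, PY. ring.
Qed.

Lemma chainQ (a b : Rbar) (Q : R -> R -> R) q q0 n x0 (Y : R -> R) dY :
  (forall x y, in_open_interval a b x -> Q x y = q x * y ^ n + q0 x) ->
  in_open_interval a b x0 -> ex_derive q x0 -> ex_derive q0 x0 ->
  is_derive Y x0 dY ->
  is_derive (fun x => Q x (Y x)) x0 (QX q q0 n x0 (Y x0) + QY q n x0 (Y x0) * dY).
Proof.
  intros HQ Hx Hq Hq0 HY.
  apply (isd_loc (fun x => q x * Y x ^ n + q0 x)).
  { eapply loc_imp; [|apply (I_loc a b x0 Hx)]. intros t Ht. simpl. rewrite HQ; auto. }
  eapply isd_eq. apply isd_plus. apply isd_mult. apply ex_isd; auto. apply isd_powf. exact HY.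
  apply ex_isd; auto.
  unfold QX, QY. ring.
Qed.

Lemma jac_formula (a b : Rbar) (P Q : R -> R -> R) e L p1 q q0 n x y :
  (forall x y, in_open_interval a b x -> P x y = dpoly e L x (y ^ n) + p1 x * y) ->
  (forall x y, in_open_interval a b x -> Q x y = q x * y ^ n + q0 x) ->
  in_open_interval a b x -> (forall l, (l <= L)%nat -> ex_derive (e l) x) -> ex_derive p1 x ->
  ex_derive q x -> ex_derive q0 x ->
  jacobian_det P Q x y = Jf e L p1 q q0 n x y.
Proof.
  intros HP HQ Hx He Hp Hq Hq0. unfold jacobian_det, Jf.
  assert (E1 : Derive (fun t => P t y) x = PX e L p1 n x y).
  { apply is_derive_unique. eapply isd_eq.
    apply (chainP a b P e L p1 n x (fun _ => y) 0 HP Hx He Hp (isd_const y x)). ring. }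
  assert (E2 : Derive (fun t => Q t y) x = QX q q0 n x y).
  { apply is_derive_unique. eapply isd_eq.
    apply (chainQ a b Q q q0 n x (fun _ => y) 0 HQ Hx Hq Hq0 (isd_const y x)). ring. }
  assert (E3 : Derive (fun t => P x t) y = PY e L p1 n x y).
  { apply is_derive_unique. apply (isd_ext (fun t => dpoly e L x (t ^ n) + p1 x * t)).
    { intros t; rewrite HP; auto. }
    eapply isd_eq. apply isd_plus.
    apply (isd_comp (fun s => dpoly e L x s) (fun t => t ^ n)). apply dpoly_ders.
    apply (isd_powf (fun t => t) y 1 n (isd_id y)).
    apply (is_derive_scal (fun t => t)). apply isd_id.
    unfold PY. ring. }
  assert (E4 : Derive (fun t => Q x t) y = QY q n x y).
  { apply is_derive_unique. apply (isd_ext (fun t => q x * t ^ n + q0 x)).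
    { intros t; rewrite HQ; auto. }
    eapply isd_eq. apply isd_plus.
    apply (is_derive_scal (fun t => t ^ n)). apply (isd_powf (fun t => t) y 1 n (isd_id y)).
    apply isd_const. unfold QY. ring. }
  rewrite E1, E2, E3, E4. reflexivity.
Qed.

Lemma exd_dpoly_pow e L x n y0 : ex_derive (fun y => dpoly e L x (y ^ n)) y0.
Proof.
  eexists. apply (isd_comp (fun s => dpoly e L x s) (fun t => t ^ n)). apply dpoly_ders.
  apply (isd_powf (fun t => t) y0 1 n (isd_id y0)).
Qed.
Lemma exd_pow n (y0 : R) : ex_derive (fun y : R => y ^ n) y0.
Proof. eexists. apply (isd_powf (fun t => t) y0 1 n (isd_id y0)). Qed.
Lemma exd_id (y0 : R) : ex_derive (fun y : R => y) y0.
Proof. eexists. apply isd_id. Qed.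

Lemma exd_dpolyD_pow a d x n y0 : ex_derive (fun y => dpolyD a d x (y ^ n)) y0.
Proof.
  unfold dpolyD. induction d.
  - simpl. apply exd_mult. apply exd_const. apply exd_mult. apply exd_const.
    apply (exd_ext (fun y => (y ^ n) ^ pred 0)). intros; reflexivity. eexists.
    apply (isd_powf (fun y => y ^ n)). apply (isd_powf (fun t => t) y0 1 n (isd_id y0)).
  - simpl. apply exd_plus. exact IHd. apply exd_mult. apply exd_const. apply exd_mult. apply exd_const.
    eexists. apply (isd_powf (fun y => y ^ n)). apply (isd_powf (fun t => t) y0 1 n (isd_id y0)).
Qed.

Lemma Jf_cont e L p1 q q0 n x y0 : continuity_pt (fun y => Jf e L p1 q q0 n x y) y0.
Proof.
  assert (H : ex_derive (fun y => Jf e L p1 q q0 n x y) y0).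
  { unfold Jf, PX, PY, QX, QY.
    apply exd_minus; apply exd_mult.
    - apply exd_plus. apply exd_dpoly_pow. apply exd_mult. apply exd_const. apply exd_id.
    - apply exd_mult. apply exd_const. apply exd_mult. apply exd_const. apply exd_pow.
    - apply exd_plus. apply exd_mult. apply exd_dpolyD_pow. apply exd_mult. apply exd_const. apply exd_pow.
      apply exd_const.
    - apply exd_plus. apply exd_mult. apply exd_const. apply exd_pow. apply exd_const. }
  destruct H as [l Hl]. eapply cont_of_isd; eauto.
Qed.

Definition inI (a b : Rbar) x := in_open_interval a b x.

Record Setup (a b : Rbar) (n L : nat) (P Q : R -> R -> R) (e : nat -> R -> R) (p1 q q0 : R -> R) : Prop := {
  S_HP : forall x y, inI a b x -> P x y = dpoly e L x (y ^ n) + p1 x * y;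
  S_HQ : forall x y, inI a b x -> Q x y = q x * y ^ n + q0 x;
  S_He : forall x, inI a b x -> forall l, (l <= L)%nat -> ex_derive (e l) x;
  S_Hp : forall x, inI a b x -> ex_derive p1 x;
  S_Hq : forall x, inI a b x -> ex_derive q x;
  S_Hq0 : forall x, inI a b x -> ex_derive q0 x;
  S_HJ : forall x y, inI a b x -> Jf e L p1 q q0 n x y <> 0;
  S_Hp1 : forall x, inI a b x -> p1 x <> 0;
  S_even : forall y, (- y) ^ n = y ^ n;
  S_odd : forall y, (- y) ^ pred n = - y ^ pred n;
  S_succ : forall y, y * y ^ pred n = y ^ n;
  S_n1 : (1 <= pred n)%nat;
  S_nonneg : forall y, 0 <= y ^ n
}.

Definition W (p1 q q0 : R -> R) n x s :=
  p1 x * Derive q0 x + (p1 x * Derive q x - INR n * q x * Derive p1 x) * s.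

Lemma I_between a b x z w : inI a b x -> inI a b z -> x <= w <= z -> inI a b w.
Proof.
  intros [Hx1 Hx2] [Hz1 Hz2] [H1 H2]. split.
  - eapply Rbar_lt_le_trans; [exact Hx1|]. simpl; exact H1.
  - eapply Rbar_le_lt_trans; [|exact Hz2]. simpl; exact H2.
Qed.


Lemma Jf_zero a b n L P Q e p1 q q0 (S : Setup a b n L P Q e p1 q q0) x :
  Jf e L p1 q q0 n x 0 = - p1 x * Derive q0 x.
Proof.
  destruct S. unfold Jf, PX, PY, QX, QY.
  assert (H1 : 0 ^ pred n = 0) by (apply pow_i; lia).
  assert (H2 : 0 ^ n = 0) by (apply pow_i; lia).
  rewrite H1, H2. ring.
Qed.

Lemma Jf_sym a b n L P Q e p1 q q0 (S : Setup a b n L P Q e p1 q q0) x y :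
  Jf e L p1 q q0 n x y + Jf e L p1 q q0 n x (- y) = -2 * W p1 q q0 n x (y ^ n).
Proof.
  destruct S. unfold Jf, PX, PY, QX, QY, W.
  rewrite S_even0, S_odd0. rewrite <- (S_succ0 y). ring.
Qed.

Lemma Jf_vsign a b n L P Q e p1 q q0 (S : Setup a b n L P Q e p1 q q0) x y z :
  inI a b x -> 0 < Jf e L p1 q q0 n x y * Jf e L p1 q q0 n x z.
Proof.
  intros Hx. apply (cont_sign (fun y => Jf e L p1 q q0 n x y)).
  intros; apply Jf_cont. intros; apply (S_HJ _ _ _ _ _ _ _ _ _ _ S); auto.
Qed.

Lemma W_sign a b n L P Q e p1 q q0 (S : Setup a b n L P Q e p1 q q0) x y :
  inI a b x -> 0 < W p1 q q0 n x (y ^ n) * (p1 x * Derive q0 x).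
Proof.
  intros Hx.
  pose proof (Jf_vsign a b n L P Q e p1 q q0 S x y 0 Hx) as A.
  pose proof (Jf_vsign a b n L P Q e p1 q q0 S x (-y) 0 Hx) as B.
  pose proof (Jf_sym a b n L P Q e p1 q q0 S x y) as C.
  rewrite (Jf_zero a b n L P Q e p1 q q0 S) in A, B.
  set (J1 := Jf e L p1 q q0 n x y) in *. set (J2 := Jf e L p1 q q0 n x (-y)) in *.
  set (Wv := W p1 q q0 n x (y ^ n)) in *.
  assert (Wv = - (J1 + J2) / 2) by (rewrite C; field). rewrite H.
  replace (- (J1 + J2) / 2 * (p1 x * Derive q0 x)) with ((J1 * (- p1 x * Derive q0 x) + J2 * (- p1 x * Derive q0 x)) / 2) by (field).
  lra.
Qed.

Lemma q0_nz a b n L P Q e p1 q q0 (S : Setup a b n L P Q e p1 q q0) x :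
  inI a b x -> Derive q0 x <> 0.
Proof.
  intros Hx E. apply (S_HJ _ _ _ _ _ _ _ _ _ _ S x 0 Hx).
  rewrite (Jf_zero a b n L P Q e p1 q q0 S), E. ring.
Qed.

Lemma q0_sign a b n L P Q e p1 q q0 (S : Setup a b n L P Q e p1 q q0) x z :
  inI a b x -> inI a b z -> 0 < Derive q0 x * Derive q0 z.
Proof.
  intros Hx Hz. destruct (Rtotal_order x z) as [H|[H|H]].
  - apply (darboux q0 (Derive q0) x z H).
    + intros ww Hw. apply ex_isd. apply (S_Hq0 _ _ _ _ _ _ _ _ _ _ S). apply (I_between a b x z ww Hx Hz Hw).
    + intros ww Hw. apply (q0_nz a b n L P Q e p1 q q0 S). apply (I_between a b x z ww Hx Hz Hw).
  - subst. pose proof (q0_nz a b n L P Q e p1 q q0 S z Hz). apply Rsqr_pos_lt in H. unfold Rsqr in H. lra.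
  - rewrite Rmult_comm. apply (darboux q0 (Derive q0) z x H).
    + intros ww Hw. apply ex_isd. apply (S_Hq0 _ _ _ _ _ _ _ _ _ _ S). apply (I_between a b z x ww Hz Hx Hw).
    + intros ww Hw. apply (q0_nz a b n L P Q e p1 q q0 S). apply (I_between a b z x ww Hz Hx Hw).
Qed.

Lemma derP_y a b n L P Q e p1 q q0 (S : Setup a b n L P Q e p1 q q0) x y :
  inI a b x -> is_derive (fun t => P x t) y (PY e L p1 n x y).
Proof.
  intros Hx. apply (isd_ext (fun t => dpoly e L x (t ^ n) + p1 x * t)).
  { intros t; rewrite (S_HP _ _ _ _ _ _ _ _ _ _ S); auto. }
  eapply isd_eq. apply isd_plus.
  apply (isd_comp (fun s => dpoly e L x s) (fun t => t ^ n)). apply dpoly_ders.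
  apply (isd_powf (fun t => t) y 1 n (isd_id y)).
  apply (is_derive_scal (fun t => t)). apply isd_id.
  unfold PY. ring.
Qed.

Lemma core_eq a b n L P Q e p1 q q0 (S : Setup a b n L P Q e p1 q q0) x y1 y2 :
  inI a b x -> P x y1 = P x y2 -> Q x y1 = Q x y2 -> y1 = y2.
Proof.
  intros Hx EP EQ.
  pose proof (S_n1 _ _ _ _ _ _ _ _ _ _ S) as Hn1.
  destruct (Req_dec (q x) 0) as [Hq|Hq].
  - destruct (Req_dec y1 y2) as [E|Hne]; auto. exfalso.
    assert (HPY : forall t, PY e L p1 n x t <> 0).
    { intros t E. apply (S_HJ _ _ _ _ _ _ _ _ _ _ S x t Hx). unfold Jf. rewrite E. unfold QY. rewrite Hq. ring. }
    destruct (MVT_gen (fun t => P x t) y1 y2 (PY e L p1 n x)) as [c [_ Hc]].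
    + intros t _. apply (derP_y a b n L P Q e p1 q q0 S x t Hx).
    + intros t _. eapply cont_of_isd. apply (derP_y a b n L P Q e p1 q q0 S x t Hx).
    + rewrite EP, Rminus_diag in Hc. symmetry in Hc. apply Rmult_integral in Hc.
      destruct Hc as [Hc|Hc]. apply (HPY c Hc). lra.
  - rewrite !(S_HQ _ _ _ _ _ _ _ _ _ _ S) in EQ by auto.
    assert (En : y1 ^ n = y2 ^ n). { apply (Rmult_eq_reg_l (q x)); auto. lra. }
    assert (Habs : Rabs y1 = Rabs y2).
    { apply (pow_inj _ _ n). lia. apply Rabs_pos. apply Rabs_pos.
      rewrite !RPow_abs, En. reflexivity. }
    assert (Hc : y2 = y1 \/ y2 = - y1).
    { revert Habs. unfold Rabs. destruct (Rcase_abs y1); destruct (Rcase_abs y2); intros; lra. }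
    destruct Hc as [Hc|Hc]; [auto|].
    rewrite !(S_HP _ _ _ _ _ _ _ _ _ _ S) in EP by auto.
    rewrite Hc, (S_even _ _ _ _ _ _ _ _ _ _ S) in EP.
    assert (p1 x * y1 = 0) by lra. apply Rmult_integral in H. destruct H as [H|H].
    exfalso; apply (S_Hp1 _ _ _ _ _ _ _ _ _ _ S x Hx H). subst. lra.
Qed.

Lemma pow_div_distr u p n : p <> 0 -> (u / p) ^ n = u ^ n / p ^ n.
Proof. intros Hp. unfold Rdiv. rewrite Rpow_mult_distr, pow_inv. reflexivity. Qed.

Lemma cont_plus (f g : R -> R) x : continuity_pt f x -> continuity_pt g x -> continuity_pt (fun t => f t + g t) x.
Proof. intros; apply (continuity_pt_plus f g); auto. Qed.
Lemma cont_minus (f g : R -> R) x : continuity_pt f x -> continuity_pt g x -> continuity_pt (fun t => f t - g t) x.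
Proof. intros; apply (continuity_pt_minus f g); auto. Qed.
Lemma cont_comp (f g : R -> R) x : continuity_pt g x -> continuity_pt f (g x) -> continuity_pt (fun t => f (g t)) x.
Proof. intros; apply (continuity_pt_comp g f); auto. Qed.

Definition Rq (p1 q : R -> R) n x := q x / p1 x ^ n.
Definition Rd (p1 q : R -> R) n x :=
  (Derive q x * p1 x ^ n - q x * (INR n * Derive p1 x * p1 x ^ pred n)) / (p1 x ^ n) ^ 2.

Lemma Rq_deriv a b n L P Q e p1 q q0 (S : Setup a b n L P Q e p1 q q0) x :
  inI a b x -> is_derive (Rq p1 q n) x (Rd p1 q n x).
Proof.
  intros Hx. unfold Rq, Rd. apply is_derive_div. apply ex_isd. apply (S_Hq _ _ _ _ _ _ _ _ _ _ S x Hx).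
  apply isd_powf. apply ex_isd. apply (S_Hp _ _ _ _ _ _ _ _ _ _ S x Hx).
  apply pow_nonzero. apply (S_Hp1 _ _ _ _ _ _ _ _ _ _ S x Hx).
Qed.

Lemma phi_sign a b n L P Q e p1 q q0 (S : Setup a b n L P Q e p1 q q0) x u eps :
  inI a b x -> 0 < eps * Derive q0 x -> 0 < eps * (Rd p1 q n x * u ^ n + Derive q0 x).
Proof.
  intros Hx He.
  pose proof (S_Hp1 _ _ _ _ _ _ _ _ _ _ S x Hx) as Hp.
  pose proof (W_sign a b n L P Q e p1 q q0 S x (u / p1 x) Hx) as HW.
  assert (Eq : (Rd p1 q n x * u ^ n + Derive q0 x) * p1 x = W p1 q q0 n x ((u / p1 x) ^ n)).
  { rewrite pow_div_distr by auto. unfold Rd, W.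
    rewrite <- (S_succ _ _ _ _ _ _ _ _ _ _ S (p1 x)).
    assert (p1 x ^ pred n <> 0) by (apply pow_nonzero; auto).
    field. split; auto. }
  rewrite <- Eq in HW.
  set (A := Rd p1 q n x * u ^ n + Derive q0 x) in *.
  set (B := Derive q0 x) in *. set (p := p1 x) in *.
  assert (H1 : 0 < (A * B) * (p * p)) by (replace ((A * B) * (p * p)) with (A * p * (p * B)) by ring; exact HW).
  assert (H2 : 0 < p * p) by (apply Rsqr_pos_lt in Hp; unfold Rsqr in Hp; lra).
  assert (H3 : 0 < A * B) by (apply (Rmult_lt_reg_r (p * p)); lra).
  assert (H4 : 0 < (eps * A) * (B * B)) by (replace ((eps * A) * (B * B)) with ((eps * B) * (A * B)) by ring; apply Rmult_lt_0_compat; auto).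
  assert (B <> 0) by (intros E; rewrite E in He; lra).
  assert (H5 : 0 < B * B) by (apply Rsqr_pos_lt in H; unfold Rsqr in H; lra).
  apply (Rmult_lt_reg_r (B * B)); lra.
Qed.

Lemma final_combo fp1 fp2 fm1 fm2 ap am A B : 0 < ap * (fp2 - fp1) -> 0 < am * (fm2 - fm1) -> ap * am < 0 ->
  fm1 <= fp1 -> fm2 <= fp2 -> (A = fp1 \/ A = fm1) -> (B = fp2 \/ B = fm2) -> A = B -> False.
Proof.
  intros H1 H2 H3 H4 H5 HA HB E.
  destruct (Rtotal_order ap 0) as [Ha|[Ha|Ha]].
  - assert (0 < am) by nra. assert (fp2 < fp1) by nra. assert (fm1 < fm2) by nra.
    destruct HA as [-> | ->]; destruct HB as [-> | ->]; lra.
  - subst. lra.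
  - assert (am < 0) by nra. assert (fp1 < fp2) by nra. assert (fm2 < fm1) by nra.
    destruct HA as [-> | ->]; destruct HB as [-> | ->]; lra.
Qed.

Lemma const_sign_open (f D : R -> R) lo hi : (forall x, lo < x < hi -> is_derive f x (D x)) ->
  (forall x, lo < x < hi -> D x <> 0) -> forall x z, lo < x < hi -> lo < z < hi -> 0 < D x * D z.
Proof.
  intros Hd Hn x z Hx Hz. destruct (Rtotal_order x z) as [H|[H|H]].
  - apply (darboux f D x z H). intros w Hw; apply Hd; lra. intros w Hw; apply Hn; lra.
  - subst. pose proof (Hn z Hz). apply Rsqr_pos_lt in H. unfold Rsqr in H. lra.
  - rewrite Rmult_comm. apply (darboux f D z x H). intros w Hw; apply Hd; lra. intros w Hw; apply Hn; lra.
Qed.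

Lemma cont_scal (f : R -> R) k x : continuity_pt f x -> continuity_pt (fun t => k * f t) x.
Proof. intros H. apply (continuity_pt_scal f k x H). Qed.

Lemma main_lt a b n L P Q e p1 q q0 (S : Setup a b n L P Q e p1 q q0) x1 y1 x2 y2 :
  inI a b x1 -> inI a b x2 -> x1 < x2 -> P x1 y1 = P x2 y2 -> Q x1 y1 = Q x2 y2 -> False.
Proof.
  intros Hx1 Hx2 Hlt EP EQ.
  pose proof S as S'. destruct S' as [HP HQ He Hp Hq Hq0 HJ Hp1 Hev Hod Hsu Hn1 Hnn].
  assert (Hn : (1 <= n)%nat) by lia.
  assert (HI : forall x, x1 <= x <= x2 -> inI a b x) by (intros; apply (I_between a b x1 x2); auto).
  set (eps := Derive q0 x1).
  assert (Heps : forall x, inI a b x -> 0 < eps * Derive q0 x) by (intros; apply (q0_sign a b n L P Q e p1 q q0 S); auto).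
  set (u1 := p1 x1 * y1). set (u2 := p1 x2 * y2). set (t1 := u1 ^ n). set (t2 := u2 ^ n).
  set (c := Q x1 y1).
  set (phi := fun t x => Rq p1 q n x * t + q0 x).
  assert (Hc1 : c = phi t1 x1).
  { unfold c, phi, t1, u1, Rq. rewrite HQ by auto. rewrite Rpow_mult_distr. field. apply pow_nonzero; auto. }
  assert (Hc2 : c = phi t2 x2).
  { unfold c, phi, t2, u2, Rq. rewrite EQ, HQ by auto. rewrite Rpow_mult_distr. field. apply pow_nonzero; auto. }
  assert (Hmono : forall uu t u w, t = uu ^ n -> inI a b u -> inI a b w -> u < w -> 0 < eps * (phi t w - phi t u)).
  { intros uu t u w Ht Hu Hw Huw.
    assert (Hd : forall s, u <= s <= w -> is_derive (phi t) s (Rd p1 q n s * t + Derive q0 s)).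
    { intros s Hs. assert (inI a b s) by (apply (I_between a b u w); auto).
      unfold phi. eapply isd_eq. apply isd_plus. apply isd_mult.
      apply (Rq_deriv a b n L P Q e p1 q q0 S); auto. apply isd_const. apply ex_isd; auto. simpl; ring. }
    apply (mono_mvt (phi t) (fun s => Rd p1 q n s * t + Derive q0 s) u w eps Huw).
    - intros s Hs; apply Hd; lra.
    - intros s Hs; eapply cont_of_isd; apply Hd; auto.
    - intros s Hs. subst t. apply (phi_sign a b n L P Q e p1 q q0 S). apply (I_between a b u w); auto; lra.
      apply Heps. apply (I_between a b u w); auto; lra. }
  assert (HA1 : forall x, x1 < x <= x2 -> 0 < eps * (phi t1 x - c)).
  { intros x Hx. rewrite Hc1. apply (Hmono u1); auto. apply HI; lra. lra. }
  assert (HA2 : forall x, x1 <= x < x2 -> 0 < eps * (c - phi t2 x)).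
  { intros x Hx. rewrite Hc2. replace (eps * (phi t2 x2 - phi t2 x)) with (eps * (phi t2 x2 - phi t2 x)) by ring.
    apply (Hmono u2); auto. apply HI; lra. lra. }
  assert (HG : forall x, x1 <= x <= x2 -> 0 < eps * Rq p1 q n x * (t1 - t2)).
  { intros x Hx. replace (eps * Rq p1 q n x * (t1 - t2)) with (eps * (phi t1 x - c) + eps * (c - phi t2 x)) by (unfold phi; ring).
    destruct (Req_dec x x1) as [E1|E1].
    - subst x. rewrite <- Hc1. assert (0 < eps * (c - phi t2 x1)) by (apply HA2; lra). lra.
    - destruct (Req_dec x x2) as [E2|E2].
      + subst x. rewrite <- Hc2. assert (0 < eps * (phi t1 x2 - c)) by (apply HA1; lra). lra.
      + assert (0 < eps * (c - phi t2 x)) by (apply HA2; lra). assert (0 < eps * (phi t1 x - c)) by (apply HA1; lra). lra. }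
  assert (HRnz : forall x, x1 <= x <= x2 -> Rq p1 q n x <> 0).
  { intros x Hx E. specialize (HG x Hx). rewrite E in HG. lra. }
  set (tau := fun x => (c - q0 x) / Rq p1 q n x).
  assert (Hphitau : forall x, x1 <= x <= x2 -> phi (tau x) x = c).
  { intros x Hx. unfold phi, tau. field. apply HRnz; auto. }
  assert (Htau1 : tau x1 = t1).
  { unfold tau. rewrite Hc1. unfold phi. field. apply HRnz; lra. }
  assert (Htau2 : tau x2 = t2).
  { unfold tau. rewrite Hc2. unfold phi. field. apply HRnz; lra. }
  assert (Ht1 : 0 <= t1) by apply Hnn. assert (Ht2 : 0 <= t2) by apply Hnn.
  assert (Htaupos : forall x, x1 < x < x2 -> 0 < tau x).
  { intros x Hx.
    assert (E1 : 0 < eps * Rq p1 q n x * (t1 - tau x)).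
    { replace (eps * Rq p1 q n x * (t1 - tau x)) with (eps * (phi t1 x - phi (tau x) x)) by (unfold phi; ring).
      rewrite Hphitau by lra. apply HA1; lra. }
    assert (E2 : 0 < eps * Rq p1 q n x * (tau x - t2)).
    { replace (eps * Rq p1 q n x * (tau x - t2)) with (eps * (phi (tau x) x - phi t2 x)) by (unfold phi; ring).
      rewrite Hphitau by lra. apply HA2; lra. }
    set (k := eps * Rq p1 q n x) in *. set (tt := tau x) in *.
    assert (E3 : 0 < (k * k) * ((t1 - tt) * (tt - t2))).
    { replace ((k * k) * ((t1 - tt) * (tt - t2))) with ((k * (t1 - tt)) * (k * (tt - t2))) by ring.
      apply Rmult_lt_0_compat; auto. }
    assert (Hk : 0 <= k * k) by nra.
    assert (E4 : 0 < (t1 - tt) * (tt - t2)).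
    { destruct (Rlt_dec 0 ((t1 - tt) * (tt - t2))) as [h|h]; auto. exfalso. nra. }
    nra. }
  assert (Htaunn : forall x, x1 <= x <= x2 -> 0 <= tau x).
  { intros x Hx. destruct (Req_dec x x1) as [->|E1]. rewrite Htau1; auto.
    destruct (Req_dec x x2) as [->|E2]. rewrite Htau2; auto. left; apply Htaupos; lra. }
  assert (Htaud : forall x, x1 <= x <= x2 -> is_derive tau x (Derive tau x)).
  { intros x Hx. apply ex_isd. unfold tau. apply exd_div. apply exd_minus. apply exd_const.
    apply Hq0; auto. eexists. apply (Rq_deriv a b n L P Q e p1 q q0 S); auto. apply HRnz; auto. }
  set (v := fun x => rt n (tau x)).
  set (G0 := fun x => dpoly e L x (tau x / p1 x ^ n)).
  assert (HG0c : forall x, x1 <= x <= x2 -> continuity_pt G0 x).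
  { intros x Hx. assert (Hs : ex_derive (fun t => tau t / p1 t ^ n) x).
    { apply exd_div. eexists; apply Htaud; auto. eexists. apply isd_powf. apply ex_isd; apply Hp; auto.
      apply pow_nonzero; apply Hp1; auto. }
    destruct Hs as [ds Hds].
    eapply cont_of_isd. unfold G0.
    apply (dpoly_derx e (fun l => Derive (e l)) L x (fun t => tau t / p1 t ^ n) ds); auto.
    intros l Hl. apply ex_isd. apply He; auto. }
  assert (Hvc : forall x, x1 <= x <= x2 -> continuity_pt v x).
  { intros x Hx. unfold v. apply (cont_comp (rt n) tau). eapply cont_of_isd; apply Htaud; auto.
    apply rt_cont; auto. }
  assert (Hbr : forall sg, sg = 1 \/ sg = -1 -> exists Df : R -> R, forall x, x1 < x < x2 ->
     is_derive (fun t => G0 t + sg * v t) x (Df x) /\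
     QY q n x (sg * v x / p1 x) * Df x = Jf e L p1 q q0 n x (sg * v x / p1 x)).
  { intros sg Hsg.
    set (Y := fun x => sg * v x / p1 x).
    assert (Hsgn : forall w, (sg * w) ^ n = w ^ n).
    { intros w. destruct Hsg as [-> | ->]. f_equal; ring. replace (-1 * w) with (- w) by ring. apply Hev. }
    exists (fun x => PX e L p1 n x (Y x) + PY e L p1 n x (Y x) * Derive Y x).
    intros x Hx. assert (HxI : inI a b x) by (apply HI; lra).
    assert (HYd : is_derive Y x (Derive Y x)).
    { apply ex_isd. unfold Y. apply exd_div. apply exd_mult. apply exd_const.
      unfold v. eexists. apply (isd_comp (rt n) tau). apply ex_isd. apply rt_exd. apply Htaupos; auto.
      apply Htaud; lra. apply Hp; auto. apply Hp1; auto. }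
    assert (Hloc : locally x (fun t => x1 < t < x2)).
    { apply (I_loc (Finite x1) (Finite x2) x). split; simpl; lra. }
    assert (HPY : forall t, x1 < t < x2 -> P t (Y t) = G0 t + sg * v t).
    { intros t Ht. assert (inI a b t) by (apply HI; lra). rewrite HP by auto. unfold G0, Y.
      assert (p1 t <> 0) by auto.
      rewrite pow_div_distr by auto. rewrite Hsgn. unfold v. rewrite rt_pow; auto. f_equal. field. auto. apply Htaunn; lra. }
    assert (HQY : forall t, x1 < t < x2 -> Q t (Y t) = c).
    { intros t Ht. assert (inI a b t) by (apply HI; lra). rewrite HQ by auto. unfold Y.
      assert (p1 t <> 0) by auto.
      rewrite pow_div_distr by auto. rewrite Hsgn. unfold v. rewrite rt_pow; auto.
      rewrite <- (Hphitau t) by lra. unfold phi, Rq. field. apply pow_nonzero; auto. apply Htaunn; lra. }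
    pose proof (chainP a b P e L p1 n x Y (Derive Y x) HP HxI (He x HxI) (Hp x HxI) HYd) as HdP.
    pose proof (chainQ a b Q q q0 n x Y (Derive Y x) HQ HxI (Hq x HxI) (Hq0 x HxI) HYd) as HdQ.
    split.
    - apply (isd_loc (fun t => P t (Y t))). eapply loc_imp; [|exact Hloc]. intros t Ht; apply HPY; auto.
      exact HdP.
    - assert (HdQ0 : is_derive (fun t => Q t (Y t)) x 0).
      { apply (isd_loc (fun _ => c)). eapply loc_imp; [|exact Hloc]. intros t Ht; simpl. rewrite HQY; auto.
        apply isd_const. }
      apply is_derive_unique in HdQ. apply is_derive_unique in HdQ0. rewrite HdQ0 in HdQ.
      fold (Y x). unfold Jf.
      assert (QX q q0 n x (Y x) = - (QY q n x (Y x) * Derive Y x)) by lra. rewrite H. ring. }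
  destruct (Hbr 1 (or_introl eq_refl)) as [Dp HDp].
  destruct (Hbr (-1) (or_intror eq_refl)) as [Dm HDm].
  assert (Hprod : forall x, x1 < x < x2 -> Dp x * Dm x < 0).
  { intros x Hx. assert (HxI : inI a b x) by (apply HI; lra).
    destruct (HDp x Hx) as [_ E1]. destruct (HDm x Hx) as [_ E2].
    set (y := 1 * v x / p1 x) in *.
    assert (Ey : -1 * v x / p1 x = - y) by (unfold y; field; apply Hp1; auto).
    rewrite Ey in E2.
    assert (EQY : QY q n x (- y) = - QY q n x y) by (unfold QY; rewrite Hod; ring).
    rewrite EQY in E2.
    pose proof (Jf_vsign a b n L P Q e p1 q q0 S x y (- y) HxI) as Hs.
    rewrite <- E1, <- E2 in Hs.
    set (k := QY q n x y) in *.
    assert (Hk : 0 < k * k).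
    { destruct (Req_dec k 0) as [Z|Z]. rewrite Z in Hs. lra. apply Rsqr_pos_lt in Z. unfold Rsqr in Z. lra. }
    replace (k * Dp x * (- k * Dm x)) with (- (k * k) * (Dp x * Dm x)) in Hs by ring.
    destruct (Rlt_dec (Dp x * Dm x) 0) as [h|h]; auto. exfalso. nra. }
  assert (Hnzp : forall x, x1 < x < x2 -> Dp x <> 0).
  { intros x Hx E. specialize (Hprod x Hx). rewrite E in Hprod. lra. }
  assert (Hnzm : forall x, x1 < x < x2 -> Dm x <> 0).
  { intros x Hx E. specialize (Hprod x Hx). rewrite E in Hprod. lra. }
  set (mid := (x1 + x2) / 2).
  assert (Hmid : x1 < mid < x2) by (unfold mid; lra).
  assert (Mp : 0 < Dp mid * ((G0 x2 + 1 * v x2) - (G0 x1 + 1 * v x1))).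
  { apply (mono_mvt (fun t => G0 t + 1 * v t) Dp x1 x2 (Dp mid) Hlt).
    - intros t Ht. apply HDp; auto.
    - intros t Ht. apply cont_plus. apply HG0c; auto. apply cont_scal. apply Hvc; auto.
    - intros t Ht. apply (const_sign_open (fun t => G0 t + 1 * v t) Dp x1 x2); auto.
      intros; apply HDp; auto. }
  assert (Mm : 0 < Dm mid * ((G0 x2 + -1 * v x2) - (G0 x1 + -1 * v x1))).
  { apply (mono_mvt (fun t => G0 t + -1 * v t) Dm x1 x2 (Dm mid) Hlt).
    - intros t Ht. apply HDm; auto.
    - intros t Ht. apply cont_plus. apply HG0c; auto. apply cont_scal. apply Hvc; auto.
    - intros t Ht. apply (const_sign_open (fun t => G0 t + -1 * v t) Dm x1 x2); auto.
      intros; apply HDm; auto. }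
  assert (Hend : forall x y, inI a b x -> tau x = (p1 x * y) ^ n ->
            P x y = G0 x + 1 * v x \/ P x y = G0 x + -1 * v x).
  { intros x y HxI Ht. assert (p1 x <> 0) by auto.
    assert (EP1 : P x y = G0 x + p1 x * y).
    { rewrite HP by auto. unfold G0. f_equal. f_equal. rewrite Ht, Rpow_mult_distr. field. apply pow_nonzero; auto. }
    assert (Ev : v x = Rabs (p1 x * y)).
    { unfold v. rewrite Ht. rewrite <- (rt_unique n (Rabs (p1 x * y))) by (auto; apply Rabs_pos).
      f_equal. rewrite RPow_abs. rewrite Rabs_pos_eq; auto. }
    rewrite EP1, Ev. unfold Rabs. destruct (Rcase_abs (p1 x * y)); [right|left]; ring. }
  assert (Hpr : Dp mid * Dm mid < 0) by (apply Hprod; auto).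
  assert (Hv1 : G0 x1 + -1 * v x1 <= G0 x1 + 1 * v x1).
  { pose proof (rt_nonneg n (tau x1)) as H. fold (v x1) in H. lra. }
  assert (Hv2 : G0 x2 + -1 * v x2 <= G0 x2 + 1 * v x2).
  { pose proof (rt_nonneg n (tau x2)) as H. fold (v x2) in H. lra. }
  assert (HAc : P x1 y1 = G0 x1 + 1 * v x1 \/ P x1 y1 = G0 x1 + -1 * v x1).
  { apply Hend; auto. }
  assert (HBc : P x2 y2 = G0 x2 + 1 * v x2 \/ P x2 y2 = G0 x2 + -1 * v x2).
  { apply Hend; auto. }
  exact (final_combo _ _ _ _ _ _ _ _ Mp Mm Hpr Hv1 Hv2 HAc HBc EP).
Qed.

Lemma sum_shift_pow (f : nat -> R) s N :
  sum_f_R0 (fun k => f k * s ^ S k) N = s * sum_f_R0 (fun k => f k * s ^ k) N.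
Proof. induction N; cbn [sum_f_R0]. simpl; ring. rewrite IHN. simpl. ring. Qed.

Theorem theorem3
  (a b : Rbar) (Hab : Rbar_lt a b)
  (h L : nat) (Hh : (1 <= h)%nat) (HL : (1 <= L)%nat)
  (p : nat -> R -> R)        (* p l = p_{2hl}, used for l = 1..L *)
  (p1 p0 q2h q0 : R -> R)
  (P Q : R -> R -> R)        (* F = (P, Q) *)
  (HP : forall x y, in_open_interval a b x ->
          P x y = sum_f_R0 (fun k => p (S k) x * y ^ (2 * h * S k)) (L - 1)
                  + p1 x * y + p0 x)
  (HQ : forall x y, in_open_interval a b x ->
          Q x y = q2h x * y ^ (2 * h) + q0 x)
  (HPan : analytic_on_strip a b P)
  (HQan : analytic_on_strip a b Q)
  (Hnonsing : forall x y, in_open_interval a b x -> jacobian_det P Q x y <> 0)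
  (Hp1 : forall x, in_open_interval a b x -> p1 x <> 0) :
  forall x1 y1 x2 y2,
    in_open_interval a b x1 -> in_open_interval a b x2 ->
    P x1 y1 = P x2 y2 -> Q x1 y1 = Q x2 y2 ->
    x1 = x2 /\ y1 = y2.
Proof.
  set (n := (2 * h)%nat).
  set (e := fun l => match l with O => p0 | S k => p (S k) end).
  assert (Hev : forall y, (- y) ^ n = y ^ n).
  { intros y. unfold n. rewrite !pow_sqr. f_equal. ring. }
  assert (Hod : forall y, (- y) ^ pred n = - y ^ pred n).
  { intros y. unfold n. replace (pred (2 * h)) with (S (2 * (h - 1))) by lia.
    change ((- y) ^ S (2 * (h - 1))) with (- y * (- y) ^ (2 * (h - 1))).
    change (y ^ S (2 * (h - 1))) with (y * y ^ (2 * (h - 1))).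
    rewrite !pow_sqr. replace (- y * - y) with (y * y) by ring. ring. }
  assert (Hsu : forall y, y * y ^ pred n = y ^ n).
  { intros y. unfold n. replace (2 * h)%nat with (S (pred (2 * h))) at 2 by lia. reflexivity. }
  assert (Hn1 : (1 <= pred n)%nat) by (unfold n; lia).
  assert (Hnn : forall y, 0 <= y ^ n).
  { intros y. unfold n. rewrite pow_sqr. apply pow_le. nra. }
  assert (HP' : forall x y, inI a b x -> P x y = dpoly e L x (y ^ n) + p1 x * y).
  { intros x y Hx. rewrite HP by auto. replace L with (S (L - 1)) at 2 by lia.
    rewrite dpoly_S. simpl e.
    assert (E : sum_f_R0 (fun k => p (S k) x * y ^ (2 * h * S k)) (L - 1)
              = sum_f_R0 (fun k => p (S k) x * (y ^ n) ^ S k) (L - 1)).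
    { apply sum_eq. intros i _. rewrite pow_mult. reflexivity. }
    rewrite E, sum_shift_pow. unfold dpoly. ring. }
  assert (HQ' : forall x y, inI a b x -> Q x y = q2h x * y ^ n + q0 x).
  { intros; apply HQ; auto. }
  assert (Hsl : forall x y, inI a b x -> ex_derive (fun t => P t y) x).
  { intros x y Hx. apply slice_exd. apply HPan. exact Hx. }
  assert (HslQ : forall x y, inI a b x -> ex_derive (fun t => Q t y) x).
  { intros x y Hx. apply slice_exd. apply HQan. exact Hx. }
  assert (He : forall x, inI a b x -> forall l, (l <= L)%nat -> ex_derive (e l) x).
  { intros x Hx. apply stage2. intros s Hs.
    set (y := rt n s).
    assert (Hy : y ^ n = s) by (apply rt_pow; [unfold n; lia | lra]).
    apply (exd_loc (fun t => (P t y + P t (- y)) / 2)).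
    { eapply loc_imp; [|apply (I_loc a b x Hx)]. intros t Ht. simpl.
      rewrite !HP' by auto. rewrite Hev, Hy. field. }
    apply exd_div. apply exd_plus; apply Hsl; auto. apply exd_const. lra. }
  assert (Hp : forall x, inI a b x -> ex_derive p1 x).
  { intros x Hx. apply (exd_loc (fun t => (P t 1 - P t (Ropp 1)) / 2)).
    { eapply loc_imp; [|apply (I_loc a b x Hx)]. intros t Ht. simpl.
      rewrite !HP' by auto. rewrite Hev. field. }
    apply exd_div. apply exd_minus; apply Hsl; auto. apply exd_const. lra. }
  assert (Hq0 : forall x, inI a b x -> ex_derive q0 x).
  { intros x Hx. apply (exd_loc (fun t => Q t 0)).
    { eapply loc_imp; [|apply (I_loc a b x Hx)]. intros t Ht. simpl.
      rewrite !HQ' by auto. rewrite pow_i by (unfold n; lia). ring. }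
    apply HslQ; auto. }
  assert (Hq : forall x, inI a b x -> ex_derive q2h x).
  { intros x Hx. apply (exd_loc (fun t => Q t 1 - Q t 0)).
    { eapply loc_imp; [|apply (I_loc a b x Hx)]. intros t Ht. simpl.
      rewrite !HQ' by auto. rewrite pow_i by (unfold n; lia). rewrite pow1. ring. }
    apply exd_minus; apply HslQ; auto. }
  assert (HJ : forall x y, inI a b x -> Jf e L p1 q2h q0 n x y <> 0).
  { intros x y Hx. rewrite <- (jac_formula a b P Q e L p1 q2h q0 n x y HP' HQ' Hx (He x Hx) (Hp x Hx) (Hq x Hx) (Hq0 x Hx)).
    apply Hnonsing; auto. }
  assert (S : Setup a b n L P Q e p1 q2h q0).
  { constructor; auto. }
  intros x1 y1 x2 y2 Hx1 Hx2 EP EQ.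
  destruct (Rtotal_order x1 x2) as [Hlt|[Heq|Hgt]].
  - exfalso. apply (main_lt a b n L P Q e p1 q2h q0 S x1 y1 x2 y2); auto.
  - subst. split; auto. apply (core_eq a b n L P Q e p1 q2h q0 S x2 y1 y2); auto.
  - exfalso. apply (main_lt a b n L P Q e p1 q2h q0 S x2 y2 x1 y1); auto.
Qed.
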